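(* Let $\mathbf{A}\in\mathsf{K}$ be such that the lowest fibre $\mathbf{A}_0$ of the Płonka sum representation of its $\{\wedge,\vee,\neg,0,1\}$-reduct is a two-element Boolean algebra. If the fibres $\mathbf{A}_i$ and $\mathbf{A}_j$ are non-trivial, then the fibre $\mathbf{A}_{i\vee j}$ is non-trivial.
   Context: $\mathsf{K}$ is the variety of type $\langle\wedge,\vee,\neg,J_2,0,1\rangle$ axiomatised by: - $x\vee x\approx x$; - $x\vee y\approx y\vee x$; - $x\vee(y\vee z)\approx(x\vee y)\vee z$; - $\neg\neg x\approx x$; - $x\wedge y\approx\neg(\neg x\vee\neg y)$; - $x\wedge(\neg x\vee y)\approx x\wedge y$; - $0\vee x\approx x$; - $1\approx\neg0$; - $J_2x\vee\neg J_2x\approx1$; - $x\vee J_2y\approx x\vee J_2(x\vee y)$; - $x\wedge J_2x\approx x$; - $J_2(x\wedge\neg x)\approx0$. The $\{\wedge,\vee,\neg,0,1\}$-reduct of any member of $\mathsf{K}$ is an involutive bisemilattice. Hence it is canonically a Płonka sum of Boolean algebras $\mathbf{A}_i$ (fibres) over a join-semilattice $\langle I,\vee,0\rangle$ with least element $0$, with homomorphisms $p_{ij}$ for $i\le j$. Operations are computed in the fibre indexed by the join of the arguments' indices, after mapping them there via the $p_{ij}$. Two elements $a,b$ lie in the same fibre iff $a\wedge(a\vee b)=a$ and $b\wedge(b\vee a)=b$. A fibre is trivial if it has one element. *)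

(* Defs.v *)
Record KSig := {
  carrier :> Type;
  kmeet : carrier -> carrier -> carrier;
  kjoin : carrier -> carrier -> carrier;
  kneg : carrier -> carrier;
  kJ2 : carrier -> carrier;
  kzero : carrier;
  kone : carrier
}.

Definition in_K (A : KSig) : Prop :=
  let m := kmeet A in let j := kjoin A in let n := kneg A in
  let J := kJ2 A in let z := kzero A in let o := kone A in
  (forall x, j x x = x) /\
  (forall x y, j x y = j y x) /\
  (forall x y w, j x (j y w) = j (j x y) w) /\
  (forall x, n (n x) = x) /\
  (forall x y, m x y = n (j (n x) (n y))) /\
  (forall x y, m x (j (n x) y) = m x y) /\
  (forall x, j z x = x) /\
  (o = n z) /\
  (forall x, j (J x) (n (J x)) = o) /\
  (forall x y, j x (J y) = j x (J (j x y))) /\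
  (forall x, m x (J x) = x) /\
  (forall x, J (m x (n x)) = z).

(** Two elements lie in the same Płonka fibre. *)
Definition same_fibre (A : KSig) (a b : A) : Prop :=
  kmeet A a (kjoin A a b) = a /\ kmeet A b (kjoin A b a) = b.

Definition fibre_nontrivial (A : KSig) (a : A) : Prop :=
  exists b : A, same_fibre A a b /\ b <> a.

Definition lowest_fibre_two (A : KSig) : Prop :=
  exists x y : A, x <> y /\
    (forall w : A, same_fibre A w (kzero A) <-> (w = x \/ w = y)).

(* Main.v *)
Require Import Defs.
From Stdlib Require Import Setoid.

Section S.
Context (A : KSig) (HK : in_K A).
Local Notation j := (kjoin A).
Local Notation m := (kmeet A).
Local Notation n := (kneg A).
Local Notation J := (kJ2 A).
Local Notation z := (kzero A).
Local Notation o := (kone A).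

Lemma jI x : j x x = x. Proof. apply HK. Qed.
Lemma jC x y : j x y = j y x. Proof. apply HK. Qed.
Lemma jA x y w : j x (j y w) = j (j x y) w. Proof. apply HK. Qed.
Lemma nn x : n (n x) = x. Proof. apply HK. Qed.
Lemma mdef x y : m x y = n (j (n x) (n y)). Proof. apply HK. Qed.
Lemma ax6 x y : m x (j (n x) y) = m x y. Proof. apply HK. Qed.
Lemma z0 x : j z x = x. Proof. apply HK. Qed.
Lemma odef : o = n z. Proof. apply HK. Qed.
Lemma ax9 x : j (J x) (n (J x)) = o. Proof. apply HK. Qed.
Lemma ax10 x y : j x (J y) = j x (J (j x y)). Proof. apply HK. Qed.
Lemma ax11 x : m x (J x) = x. Proof. apply HK. Qed.
Lemma ax12 x : J (m x (n x)) = z. Proof. apply HK. Qed.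

Lemma nj x y : n (j x y) = m (n x) (n y).
Proof. rewrite mdef, !nn; reflexivity. Qed.
Lemma nm x y : n (m x y) = j (n x) (n y).
Proof. rewrite mdef, nn; reflexivity. Qed.
Lemma mI x : m x x = x. Proof. rewrite mdef, jI, nn; reflexivity. Qed.
Lemma mC x y : m x y = m y x. Proof. rewrite !mdef, jC; reflexivity. Qed.
Lemma mA x y w : m x (m y w) = m (m x y) w.
Proof. rewrite !mdef, !nn, jA; reflexivity. Qed.
Lemma abs1 x : m x (j x (n x)) = x.
Proof. rewrite jC, ax6, mI; reflexivity. Qed.
Lemma abs2 x : m (n x) (j (n x) x) = n x.
Proof. pose proof (abs1 (n x)) as e. rewrite nn in e. exact e. Qed.
Lemma dual x y : j x (m (n x) y) = j x y.
Proof.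
  pose proof (ax6 (n x) (n y)) as H. rewrite nn in H.
  apply (f_equal n) in H. rewrite !nm, !nn, nj, nn in H. exact H.
Qed.
Lemma no : n o = z. Proof. rewrite odef, nn; reflexivity. Qed.
Lemma om x : m o x = x. Proof. rewrite mdef, no, z0, nn; reflexivity. Qed.

Lemma L1 w : w = m w z -> n w = m (n w) z -> w = n w.
Proof.
  intros H1 H2.
  assert (E1 : n w = j (n w) o) by (rewrite H1 at 1; rewrite nm, <- odef; reflexivity).
  assert (E2 : w = j w o) by (rewrite <- (nn w) at 1; rewrite H2, nm, nn, <- odef; reflexivity).
  assert (F1 : m w (n w) = w) by (rewrite E1, ax6, mC, om; reflexivity).
  assert (F2 : m (n w) w = n w).
  { rewrite E2 at 2. rewrite <- (nn w) at 2. rewrite ax6, mC, om. reflexivity. }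
  rewrite <- F1 at 1. rewrite mC, F2. reflexivity.
Qed.

Lemma topL a : m a (n a) = j (m a (n a)) o -> a = n a.
Proof.
  intro H. set (u := m a (n a)) in *.
  assert (Hu : n u = m (n u) z) by (rewrite H at 1; rewrite nj, no; reflexivity).
  assert (Nu : n u = j (n a) a) by (unfold u; rewrite nm, nn; reflexivity).
  apply L1.
  - rewrite <- (abs1 a) at 1. rewrite (jC a (n a)), <- Nu, Hu, mA, Nu, (jC (n a) a), abs1. reflexivity.
  - rewrite <- (abs1 (n a)) at 1. rewrite nn, <- Nu, Hu, mA, Nu, abs2. reflexivity.
Qed.

Lemma trivf a c : n a = a -> same_fibre A a c -> c = a.
Proof.
  intros Ha [H1 H2].
  assert (K : forall y, m a (j a y) = m a y) by (intro y; pose proof (ax6 a y) as e; rewrite Ha in e; exact e).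
  assert (E1 : a = m a c) by (rewrite <- K; symmetry; exact H1).
  assert (E2 : a = j a (n c)) by (rewrite <- Ha at 1; rewrite E1 at 1; rewrite nm, Ha; reflexivity).
  assert (E3 : a = m a (n c)) by (rewrite <- K, <- E2, mI; reflexivity).
  assert (E4 : a = j a c) by (rewrite <- Ha at 1; rewrite E3 at 1; rewrite nm, Ha, nn; reflexivity).
  rewrite <- H2, (jC c a), <- E4, mC. symmetry; exact E1.
Qed.

Lemma Jfib x : same_fibre A (J x) z.
Proof.
  split.
  - rewrite jC, z0, mI; reflexivity.
  - assert (Z : z = m (J x) (n (J x))) by (rewrite <- no, <- (ax9 x), nj, nn, mC; reflexivity).
    rewrite z0. rewrite Z at 1. rewrite mC, mA, mI. symmetry; exact Z.
Qed.

Lemma mainS (H0 : lowest_fibre_two A)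
  (a b : A) (Ha : fibre_nontrivial A a) (Hb : fibre_nontrivial A b) :
  fibre_nontrivial A (j a b).
Proof.
  assert (nt : forall c, fibre_nontrivial A c -> n c <> c).
  { intros c [d [Hd1 Hd2]] E. apply Hd2. exact (trivf c d E Hd1). }
  pose proof (nt a Ha) as na. pose proof (nt b Hb) as nb.
  destruct H0 as [x [y [xy Hf]]].
  assert (zo : o <> z).
  { intro E. assert (E' : n z = z) by (rewrite <- odef; exact E).
    assert (ex : x = z).
    { apply (trivf z x E'). destruct (proj2 (Hf x) (or_introl eq_refl)) as [p q]. split; assumption. }
    assert (ey : y = z).
    { apply (trivf z y E'). destruct (proj2 (Hf y) (or_intror eq_refl)) as [p q]. split; assumption. }
    apply xy. rewrite ex, ey. reflexivity. }
  assert (Jv : forall w, J w = z \/ J w = o).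
  { intro w. assert (Hz : z = x \/ z = y).
    { apply Hf. split; rewrite jI, mI; reflexivity. }
    assert (Ho : o = x \/ o = y).
    { apply Hf. split.
      - rewrite jC, z0, mI; reflexivity.
      - rewrite z0, mC, om; reflexivity. }
    destruct (proj1 (Hf (J w)) (Jfib w)) as [e|e];
    destruct Hz as [e1|e1]; destruct Ho as [e2|e2]; 
      first [ left; congruence | right; congruence | exfalso; congruence ]. }
  set (t := j b (n b)).
  assert (Jt : J t = o).
  { destruct (Jv t) as [e|e]; [|exact e]. exfalso. apply nb. symmetry.
    assert (Ht : t = m t z) by (rewrite <- e; symmetry; apply ax11).
    apply L1.
    - rewrite <- (abs1 b) at 1. fold t. rewrite Ht at 1. rewrite mA.
      unfold t. rewrite abs1. reflexivity.
    - rewrite <- (abs2 b) at 1. rewrite (jC (n b) b). fold t. rewrite Ht at 1.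
      rewrite mA. unfold t. rewrite (jC b (n b)), abs2. reflexivity. }
  set (u := m a (n a)).
  assert (Jv2 : J (j u t) = o).
  { destruct (Jv (j u t)) as [e|e]; [|exact e]. exfalso. apply na. symmetry.
    apply topL. fold u.
    pose proof (ax10 u t) as E. rewrite Jt, e in E.
    rewrite E, jC, z0. reflexivity. }
  set (w := m (n t) a).
  assert (nw : n w = j t (n a)) by (unfold w; rewrite nm, nn; reflexivity).
  assert (C1 : m w (n w) = m w (n a)).
  { rewrite <- (ax6 w (n a)). f_equal. rewrite nw, <- jA, jI. reflexivity. }
  assert (C2 : m w (n w) = m w t).
  { rewrite <- (ax6 w t). f_equal. rewrite nw, (jC t (n a)), <- jA, jI. reflexivity. }
  assert (C3 : m w t = w).
  { unfold w. assert (Nt : n t = m (n b) b) by (unfold t; rewrite nj, nn; reflexivity).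
    rewrite Nt. rewrite <- !mA. f_equal.
    rewrite (mA b a t), (mC b a), <- (mA a b t). f_equal.
    unfold t. apply abs1. }
  assert (W : m w (n a) = w) by (rewrite <- C1, C2, C3; reflexivity).
  assert (S3 : j u t = j (j a b) (n (j a b))).
  { rewrite jC. rewrite <- (dual t u).
    assert (e : m (n t) u = w) by (unfold u; rewrite mA; fold w; exact W).
    rewrite e. unfold w. rewrite dual.
    assert (e2 : m (n (j a b)) (n b) = n (j a b)) by (rewrite nj, <- mA, mI; reflexivity).
    rewrite <- e2, dual. unfold t. rewrite jC, jA. reflexivity. }
  exists (n (j a b)). split.
  - split; [apply abs1 | apply abs2].
  - intro E. apply zo. rewrite <- Jv2, S3, E, jI.
    rewrite <- (ax12 (j a b)), E, mI. reflexivity.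
Qed.

End S.

Theorem lemma4p4 (A : KSig) (HK : in_K A) (H0 : lowest_fibre_two A)
  (a b : A) (Ha : fibre_nontrivial A a) (Hb : fibre_nontrivial A b) :
  fibre_nontrivial A (kjoin A a b).
Proof. exact (mainS A HK H0 a b Ha Hb). Qed.
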